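(* Let $(A,B)$ be a finite-dimensional odd-symmetric associative superalgebra over an algebraically closed field $\mathbb{K}$ of characteristic zero such that $A_{\bar 0}$ is a semi-simple $A_{\bar 0}$-bimodule. Then $$A=S_1\oplus\cdots\oplus S_n\oplus N\oplus \hat S_1\oplus\cdots\oplus\hat S_n\oplus\hat N,$$ where each $S_i$ is a simple two-sided ideal of $A_{\bar 0}$, $N=\mathrm{Ann}(A_{\bar 0})$, each $\hat S_i$ is an irreducible $A_{\bar 0}$-sub-bimodule of $A_{\bar 1}$, and $\hat N$ is an $A_{\bar 0}$-sub-bimodule of $A_{\bar 1}$ with $A_{\bar 0}\hat N=\{0\}=\hat N A_{\bar 0}$, with $A_{\bar 0}=S_1\oplus\cdots\oplus S_n\oplus N$ and $A_{\bar 1}=\hat S_1\oplus\cdots\oplus\hat S_n\oplus\hat N$. Moreover: (i) $\hat S_i\hat S_j=\{0\}=\hat S_j\hat S_i$ for $i\neq j$; (ii) $\hat S_i\hat S_i\in\{\{0\},S_i\}$ for all $i$; (iii) $\hat N\hat S_i=\{0\}=\hat S_i\hat N$ for all $i$; (iv) $\hat N\hat N\subseteq N$.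
   Context: A superalgebra is $\mathbb{Z}_2$-graded, $A=A_{\bar 0}\oplus A_{\bar 1}$, $A_\alpha A_\beta\subseteq A_{\alpha+\beta}$. An odd-symmetric structure on $A$ is a bilinear form $B$ with $B(A_{\bar 0},A_{\bar 0})=B(A_{\bar 1},A_{\bar 1})=0$ which is supersymmetric ($B(x,y)=(-1)^{|x||y|}B(y,x)$), associative ($B(xy,z)=B(x,yz)$) and non-degenerate. $A_{\bar 0}$ and $A_{\bar 1}$ are $A_{\bar 0}$-bimodules via left and right multiplication; a bimodule is semi-simple if every sub-bimodule has a complementary sub-bimodule, and irreducible if it is non-zero with no sub-bimodules other than $\{0\}$ and itself. $\mathrm{Ann}(A_{\bar 0})=\{x\in A_{\bar 0}: xA_{\bar 0}=A_{\bar 0}x=\{0\}\}$. *)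

(* Defs.v *)
(* finite-dimensional (non-unital) associative superalgebras
   over a field, modelled as a vectType A over F with a bilinear product. *)
From HB Require Import structures.
From mathcomp Require Import all_boot all_order all_algebra.
Set Implicit Arguments. Unset Strict Implicit. Unset Printing Implicit Defensive.
Import GRing.Theory.
Local Open Scope ring_scope.

Section Defs.
Variables (F : fieldType) (A : vectType F).

Definition bilinear_mul (mul : A -> A -> A) : Prop :=
  (forall (a : F) x y z, mul (a *: x + y) z = a *: mul x z + mul y z) /\
  (forall (a : F) x y z, mul z (a *: x + y) = a *: mul z x + mul z y).

Definition assoc_mul (mul : A -> A -> A) : Prop :=
  forall x y z, mul (mul x y) z = mul x (mul y z).

Definition superalgebra (A0 A1 : {vspace A}) (mul : A -> A -> A) : Prop :=
  [/\ bilinear_mul mul, assoc_mul mul,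
      (A0 + A1)%VS = fullv, directv (A0 + A1) &
      [/\ forall x y, x \in A0 -> y \in A0 -> mul x y \in A0,
          forall x y, x \in A0 -> y \in A1 -> mul x y \in A1,
          forall x y, x \in A1 -> y \in A0 -> mul x y \in A1 &
          forall x y, x \in A1 -> y \in A1 -> mul x y \in A0]].

(* the subspace U V spanned by all products u v, u in U, v in V *)
Definition mprodv (mul : A -> A -> A) (U V : {vspace A}) : {vspace A} :=
  (\sum_(i < \dim U) \sum_(j < \dim V) <[mul (vbasis U)`_i (vbasis V)`_j]>)%VS.

Definition odd_symmetric (A0 A1 : {vspace A}) (mul : A -> A -> A)
    (B : A -> A -> F) : Prop :=
  [/\ (forall (a : F) x y z, B (a *: x + y) z = a * B x z + B y z),
      (forall (a : F) x y z, B z (a *: x + y) = a * B z x + B z y),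
      (forall x y, x \in A0 -> y \in A0 -> B x y = 0) /\
      (forall x y, x \in A1 -> y \in A1 -> B x y = 0),
      (* supersymmetry B(x,y) = (-1)^{|x||y|} B(y,x) for homogeneous x, y *)
      [/\ forall x y, x \in A0 -> y \in A0 -> B x y = B y x,
          forall x y, x \in A0 -> y \in A1 -> B x y = B y x,
          forall x y, x \in A1 -> y \in A0 -> B x y = B y x &
          forall x y, x \in A1 -> y \in A1 -> B x y = - B y x] &
      (forall x y z, B (mul x y) z = B x (mul y z)) /\
      (forall x, (forall y, B x y = 0) -> x = 0)].

Definition sub_bimodule (A0 : {vspace A}) (mul : A -> A -> A)
    (M U : {vspace A}) : Prop :=
  [/\ (U <= M)%VS, (mprodv mul A0 U <= U)%VS & (mprodv mul U A0 <= U)%VS].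

Definition semisimple_bimodule (A0 : {vspace A}) (mul : A -> A -> A)
    (M : {vspace A}) : Prop :=
  forall U, sub_bimodule A0 mul M U ->
    exists W, [/\ sub_bimodule A0 mul M W, (U + W)%VS = M & (U :&: W)%VS = 0%VS].

Definition irreducible_bimodule (A0 : {vspace A}) (mul : A -> A -> A)
    (M U : {vspace A}) : Prop :=
  [/\ sub_bimodule A0 mul M U, U != 0%VS &
      forall V, sub_bimodule A0 mul U V -> V = 0%VS \/ V = U].

Definition ideal_of (mul : A -> A -> A) (A0 I : {vspace A}) : Prop :=
  sub_bimodule A0 mul A0 I.

Definition simple_alg (mul : A -> A -> A) (S : {vspace A}) : Prop :=
  mprodv mul S S != 0%VS /\
  forall I, ideal_of mul S I -> I = 0%VS \/ I = S.

Definition is_Ann (mul : A -> A -> A) (A0 N : {vspace A}) : Prop :=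
  forall x, x \in N <->
    (x \in A0 /\ forall a, a \in A0 -> mul x a = 0 /\ mul a x = 0).

End Defs.

(* Main.v *)
Require Import Defs.
From HB Require Import structures.
From mathcomp Require Import all_boot all_order all_algebra all_field.
From Stdlib Require Import Classical Lia.
From mathcomp Require Import zify.
Import GRing.Theory.
Local Open Scope ring_scope.

Module Helpers.
Set Implicit Arguments. Unset Strict Implicit. Unset Printing Implicit Defensive.


Section Mul.
Variables (F : fieldType) (A : vectType F) (mul : A -> A -> A).
Hypothesis Hbil : bilinear_mul mul.
Hypothesis Hass : assoc_mul mul.

Lemma mmulZDl a x y z : mul (a *: x + y) z = a *: mul x z + mul y z.
Proof. exact: Hbil.1. Qed.
Lemma mmulZDr a x y z : mul z (a *: x + y) = a *: mul z x + mul z y.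
Proof. exact: Hbil.2. Qed.
Lemma mmul0l z : mul 0 z = 0.
Proof.
have := mmulZDl 1 0 0 z; rewrite !scale1r addr0 => /(congr1 (fun t => t - mul 0 z)).
rewrite subrr addrK; move=> H; exact: esym H.
Qed.
Lemma mmul0r z : mul z 0 = 0.
Proof.
have := mmulZDr 1 0 0 z; rewrite !scale1r addr0 => /(congr1 (fun t => t - mul z 0)).
rewrite subrr addrK; move=> H; exact: esym H.
Qed.
Lemma mmulDl x y z : mul (x + y) z = mul x z + mul y z.
Proof. by have := mmulZDl 1 x y z; rewrite !scale1r. Qed.
Lemma mmulDr x y z : mul z (x + y) = mul z x + mul z y.
Proof. by have := mmulZDr 1 x y z; rewrite !scale1r. Qed.
Lemma mmulZl a x z : mul (a *: x) z = a *: mul x z.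
Proof. by have := mmulZDl a x 0 z; rewrite !addr0 mmul0l addr0. Qed.
Lemma mmulZr a x z : mul z (a *: x) = a *: mul z x.
Proof. by have := mmulZDr a x 0 z; rewrite !addr0 mmul0r addr0. Qed.

Lemma sum_closed (P : A -> Prop) (I : finType) (Q : pred I) (f : I -> A) :
  P 0 -> (forall a x y, P x -> P y -> P (a *: x + y)) ->
  (forall i, Q i -> P (f i)) -> P (\sum_(i | Q i) f i).
Proof.
move=> P0 Pc Pf; elim/big_rec: _ => // i x Qi Px.
by have := Pc 1 _ _ (Pf i Qi) Px; rewrite scale1r.
Qed.

Lemma span_ind (P : A -> Prop) (U : {vspace A}) :
  P 0 -> (forall a x y, P x -> P y -> P (a *: x + y)) ->
  (forall u, u \in U -> P u) -> True.
Proof. by []. Qed.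

Lemma vbasis_ind (P : A -> Prop) (U : {vspace A}) :
  P 0 -> (forall a x y, P x -> P y -> P (a *: x + y)) ->
  (forall i : 'I_(\dim U), P (vbasis U)`_i) -> forall u, u \in U -> P u.
Proof.
move=> P0 Pc Pb u /coord_vbasis ->; apply: sum_closed => // i _.
by have := Pc (coord (vbasis U) i u) _ _ (Pb i) P0; rewrite addr0.
Qed.

Lemma mprodv_ind (P : A -> Prop) (U V : {vspace A}) :
  P 0 -> (forall a x y, P x -> P y -> P (a *: x + y)) ->
  (forall u v, u \in U -> v \in V -> P (mul u v)) ->
  forall x, x \in mprodv mul U V -> P x.
Proof.
move=> P0 Pc Pm x /memv_sumP[vs Hvs ->]; apply: sum_closed => // i _.
have /memv_sumP[ws Hws ->] := Hvs i isT; apply: sum_closed => // j _.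
have /vlineP[k ->] := Hws j isT.
have := Pc k _ _ (Pm _ _ (vbasis_mem (mem_nth 0 _)) (vbasis_mem (mem_nth 0 _))) P0.
by move=> H; have := H i j; rewrite !size_tuple addr0; apply.
Qed.

Lemma mprodv_sub (U V T : {vspace A}) :
  (forall u v, u \in U -> v \in V -> mul u v \in T) -> (mprodv mul U V <= T)%VS.
Proof.
move=> H; apply/subvP; apply: mprodv_ind => //; first exact: mem0v.
by move=> a x y Hx Hy; rewrite memvD ?memvZ.
Qed.

Lemma mem_mprodv (U V : {vspace A}) u v :
  u \in U -> v \in V -> mul u v \in mprodv mul U V.
Proof.
move=> Hu Hv; move: u Hu v Hv; apply: vbasis_ind.
- by move=> v _; rewrite mmul0l mem0v.
- by move=> a x y Hx Hy v Hv; rewrite mmulZDl memvD ?memvZ ?Hx ?Hy.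
move=> i; apply: vbasis_ind.
- by rewrite mmul0r mem0v.
- by move=> a x y Hx Hy; rewrite mmulZDr memvD ?memvZ.
move=> j; rewrite /mprodv; apply: (subvP (sumv_sup i isT (subvv _))).
exact: (subvP (sumv_sup j isT (subvv _)) _ (memv_line _)).
Qed.

Lemma mprodvS (U V U' V' : {vspace A}) :
  (U <= U')%VS -> (V <= V')%VS -> (mprodv mul U V <= mprodv mul U' V')%VS.
Proof.
move=> /subvP HU /subvP HV; apply: mprodv_sub => u v Hu Hv.
by apply: mem_mprodv; [apply: HU | apply: HV].
Qed.

Lemma mprodvA1 (U V W : {vspace A}) :
  (mprodv mul (mprodv mul U V) W <= mprodv mul U (mprodv mul V W))%VS.
Proof.
apply: mprodv_sub => x w Hx Hw; move: x Hx.
apply: mprodv_ind.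
- by rewrite mmul0l mem0v.
- by move=> a x y Hx Hy; rewrite mmulZDl memvD ?memvZ.
move=> u v Hu Hv; rewrite Hass; apply: mem_mprodv => //.
exact: mem_mprodv.
Qed.

Lemma mprodvA2 (U V W : {vspace A}) :
  (mprodv mul U (mprodv mul V W) <= mprodv mul (mprodv mul U V) W)%VS.
Proof.
apply: mprodv_sub => u x Hu Hx; move: x Hx.
apply: mprodv_ind.
- by rewrite mmul0r mem0v.
- by move=> a x y Hx Hy; rewrite mmulZDr memvD ?memvZ.
move=> v w Hv Hw; rewrite -Hass; apply: mem_mprodv => //.
exact: mem_mprodv.
Qed.

Lemma mprodvDl (U V W : {vspace A}) :
  (mprodv mul (U + V) W <= mprodv mul U W + mprodv mul V W)%VS.
Proof.
apply: mprodv_sub => x w /memv_addP[u Hu [v Hv ->]] Hw.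
by rewrite mmulDl memv_add ?mem_mprodv.
Qed.

Lemma mprodvDr (U V W : {vspace A}) :
  (mprodv mul W (U + V) <= mprodv mul W U + mprodv mul W V)%VS.
Proof.
apply: mprodv_sub => w x Hw /memv_addP[u Hu [v Hv ->]].
by rewrite mmulDr memv_add ?mem_mprodv.
Qed.

Lemma mprodv0 (U V : {vspace A}) u v :
  mprodv mul U V = 0%VS -> u \in U -> v \in V -> mul u v = 0.
Proof. by move=> H Hu Hv; apply/eqP; rewrite -memv0 -H mem_mprodv. Qed.

Lemma mprodv_eq0 (U V : {vspace A}) :
  (forall u v, u \in U -> v \in V -> mul u v = 0) -> mprodv mul U V = 0%VS.
Proof.
move=> H; apply/eqP; rewrite -subv0; apply: mprodv_sub => u v Hu Hv.
by rewrite H ?mem0v.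
Qed.

Lemma mprodv_le0 (U V : {vspace A}) : (mprodv mul U V <= 0)%VS -> mprodv mul U V = 0%VS.
Proof. by rewrite subv0 => /eqP. Qed.

End Mul.


Lemma lfunE' (F : fieldType) (aT rT : vectType F) (f : aT -> rT) (lf : linear f) :
  linfun f =1 f.
Proof.
pose ff : {linear aT -> rT} := HB.pack f (GRing.isLinear.Build _ _ _ _ f lf).
exact: (lfunE ff).
Qed.

Section Form.
Variables (F : fieldType) (A : vectType F) (B : A -> A -> F).
Hypothesis BZDl : forall (a : F) x y z, B (a *: x + y) z = a * B x z + B y z.
Hypothesis BZDr : forall (a : F) x y z, B z (a *: x + y) = a * B z x + B z y.

Lemma B0l z : B 0 z = 0.
Proof.
have := BZDl 1 0 0 z; rewrite scale1r addr0 mul1r => /(congr1 (fun t => t - B 0 z)).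
rewrite subrr addrK; move=> H; exact: esym H.
Qed.
Lemma B0r z : B z 0 = 0.
Proof.
have := BZDr 1 0 0 z; rewrite scale1r addr0 mul1r => /(congr1 (fun t => t - B z 0)).
rewrite subrr addrK; move=> H; exact: esym H.
Qed.
Lemma BDl x y z : B (x + y) z = B x z + B y z.
Proof. by have := BZDl 1 x y z; rewrite scale1r mul1r. Qed.
Lemma BDr x y z : B z (x + y) = B z x + B z y.
Proof. by have := BZDr 1 x y z; rewrite scale1r mul1r. Qed.

Definition annf (U : {vspace A}) (z : A) : 'rV[F]_(\dim U) :=
  \row_(k < \dim U) B (vbasis U)`_k z.

Lemma annf_lin U : linear (annf U).
Proof. move=> a u v; rewrite /annf; apply/rowP => k; by rewrite !mxE BZDr. Qed.

Definition ann (T U : {vspace A}) : {vspace A} :=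
  (T :&: lker (linfun (annf U)))%VS.

Lemma memv_ann T U z :
  z \in ann T U <-> z \in T /\ (forall u, u \in U -> B u z = 0).
Proof.
rewrite /ann memv_cap memv_ker (@lfunE' _ _ _ _ (annf_lin U)); split.
  case/andP=> -> /eqP H; split => //; apply: vbasis_ind; first exact: B0l.
    by move=> a x y Hx Hy; rewrite BZDl Hx Hy mulr0 addr0.
  by move=> i; have := congr1 (fun r : 'rV[F]_(\dim U) => r 0 i) H; rewrite !mxE.
case=> -> H; apply/eqP/rowP => k; rewrite !mxE H //.
by apply: vbasis_mem; apply: mem_nth; rewrite size_tuple.
Qed.

Lemma annS T U U' : (U <= U')%VS -> (ann T U' <= ann T U)%VS.
Proof.
move/subvP=> H; apply/subvP => z /memv_ann[Hz H']; apply/memv_ann; split=> //.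
by move=> u /H; apply: H'.
Qed.

Lemma ann_sub T U : (ann T U <= T)%VS.
Proof. exact: capvSl. Qed.

Lemma ann_dim_ge T U : (\dim T <= \dim (ann T U) + \dim U)%N.
Proof.
have := limg_ker_dim (linfun (annf U)) T.
have : (\dim (linfun (annf U) @: T) <= \dim U)%N.
  have := dimvS (subvf (linfun (annf U) @: T)).
  by rewrite dimvf /dim /= mul1n.
rewrite /ann; lia.
Qed.

Variables P Q : {vspace A}.
Hypothesis HPQ : (P + Q)%VS = fullv.
Hypothesis BPP : forall x y, x \in P -> y \in P -> B x y = 0.
Hypothesis BQQ : forall x y, x \in Q -> y \in Q -> B x y = 0.
Hypothesis symPQ : forall x y, x \in P -> y \in Q -> B x y = B y x.
Hypothesis nondeg : forall x, (forall y, B x y = 0) -> x = 0.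

Lemma nondegQ z : z \in Q -> (forall u, u \in P -> B u z = 0) -> z = 0.
Proof.
move=> Hz H; apply: nondeg => y.
have : y \in (P + Q)%VS by rewrite HPQ memvf.
case/memv_addP=> p Hp [q Hq ->]; rewrite BDr -symPQ // H // BQQ // addr0. by [].
Qed.

Lemma annQP : ann Q P = 0%VS.
Proof.
apply/eqP; rewrite -subv0; apply/subvP => z /memv_ann[Hz H].
by rewrite (nondegQ Hz H) mem0v.
Qed.

Lemma dimQP : (\dim Q <= \dim P)%N.
Proof. by have := ann_dim_ge Q P; rewrite annQP dimv0. Qed.

Lemma ann_dim U : (\dim P <= \dim Q)%N -> (U <= P)%VS ->
  (\dim (ann Q U) + \dim U)%N = \dim Q.
Proof.
move=> hPQ hUP; set W := (P :\: U)%VS.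
have hUW := dimv_cap_compl P U; rewrite (capv_idPr hUP) -/W in hUW.
have h0 : (ann Q U :&: ann Q W = 0)%VS.
  apply/eqP; rewrite -subv0 -annQP; apply/subvP => z /memv_capP[].
  move=> /memv_ann[Hz H1] /memv_ann[_ H2]; apply/memv_ann; split => // p Hp.
  have := addv_diff_cap P U; rewrite (capv_idPr hUP) => E.
  move: Hp; rewrite -E => /memv_addP[w Hw [u Hu ->]].
  by rewrite BDl H2 // H1 // addr0.
have hs := dimv_sum_cap (ann Q U) (ann Q W); rewrite h0 dimv0 in hs.
have hle : (\dim (ann Q U + ann Q W) <= \dim Q)%N.
  by apply: dimvS; rewrite subv_add !ann_sub.
have := ann_dim_ge Q U; have := ann_dim_ge Q W; lia.
Qed.

End Form.


Section Main.
Variables (F : fieldType) (A : vectType F) (A0 A1 : {vspace A}).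
Variables (mul : A -> A -> A) (B : A -> A -> F).
Hypothesis Hsup : superalgebra A0 A1 mul.
Hypothesis Hsym : odd_symmetric A0 A1 mul B.

Let Hbil : bilinear_mul mul. Proof. by case: Hsup. Qed.
Let Hass : assoc_mul mul. Proof. by case: Hsup. Qed.
Let Hfull : (A0 + A1)%VS = fullv. Proof. by case: Hsup. Qed.
Let Hfull' : (A1 + A0)%VS = fullv. Proof. by rewrite addvC Hfull. Qed.
Let m00 x y : x \in A0 -> y \in A0 -> mul x y \in A0.
Proof. by case: Hsup => _ _ _ _ [H _ _ _]; apply: H. Qed.
Let m01 x y : x \in A0 -> y \in A1 -> mul x y \in A1.
Proof. by case: Hsup => _ _ _ _ [_ H _ _]; apply: H. Qed.
Let m10 x y : x \in A1 -> y \in A0 -> mul x y \in A1.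
Proof. by case: Hsup => _ _ _ _ [_ _ H _]; apply: H. Qed.
Let m11 x y : x \in A1 -> y \in A1 -> mul x y \in A0.
Proof. by case: Hsup => _ _ _ _ [_ _ _ H]; apply: H. Qed.
Let BZDl : forall (a : F) x y z, B (a *: x + y) z = a * B x z + B y z.
Proof. by case: Hsym. Qed.
Let BZDr : forall (a : F) x y z, B z (a *: x + y) = a * B z x + B z y.
Proof. by case: Hsym. Qed.
Let B00 x y : x \in A0 -> y \in A0 -> B x y = 0.
Proof. by case: Hsym => _ _ [H _] _ _; apply: H. Qed.
Let B11 x y : x \in A1 -> y \in A1 -> B x y = 0.
Proof. by case: Hsym => _ _ [_ H] _ _; apply: H. Qed.
Let s01 x y : x \in A0 -> y \in A1 -> B x y = B y x.
Proof. by case: Hsym => _ _ _ [_ H _ _] _; apply: H. Qed.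
Let s10 x y : x \in A1 -> y \in A0 -> B x y = B y x.
Proof. by case: Hsym => _ _ _ [_ _ H _] _; apply: H. Qed.
Let Bass x y z : B (mul x y) z = B x (mul y z).
Proof. by case: Hsym => _ _ _ _ [H _]; apply: H. Qed.
Let Bnd x : (forall y, B x y = 0) -> x = 0.
Proof. by case: Hsym => _ _ _ _ [_ H]; apply: H. Qed.

Let ml0 := mmul0l Hbil. Let mr0 := mmul0r Hbil. Let mlD := mmulDl Hbil.
Let mrD := mmulDr Hbil. Let mlZD := mmulZDl Hbil. Let mrZD := mmulZDr Hbil.
Let memM := mem_mprodv Hbil. Let mS := mprodvS Hbil.
Let mA1 := mprodvA1 Hbil Hass. Let mA2 := mprodvA2 Hbil Hass.
Let mDl := mprodvDl Hbil. Let mDr := mprodvDr Hbil. Let m0 := mprodv0 Hbil.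
Let Bl0 := B0l BZDl. Let Br0 := B0r BZDr. Let BlD := BDl BZDl. Let BrD := BDr BZDr.
Let mann := memv_ann BZDl BZDr.

Let ann1 U := ann B A1 U.
Let ann0 X := ann B A0 X.

Lemma dimA : \dim A0 = \dim A1.
Proof.
apply/eqP; rewrite eqn_leq.
by rewrite (dimQP BZDl BZDr Hfull' B00 s10 Bnd) (dimQP BZDl BZDr Hfull B11 s01 Bnd).
Qed.

Lemma dim_ann1 U : (U <= A0)%VS -> (\dim (ann1 U) + \dim U)%N = \dim A1.
Proof. by apply: (ann_dim BZDl BZDr Hfull B11 s01 Bnd); rewrite dimA. Qed.

Lemma dim_ann0 X : (X <= A1)%VS -> (\dim (ann0 X) + \dim X)%N = \dim A0.
Proof. by apply: (ann_dim BZDl BZDr Hfull' B00 s10 Bnd); rewrite dimA. Qed.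

Lemma zero1 y : y \in A1 -> (forall x, x \in A0 -> B x y = 0) -> y = 0.
Proof. exact: (nondegQ BZDr Hfull B11 s01 Bnd). Qed.

Lemma zero0 x : x \in A0 -> (forall y, y \in A1 -> B y x = 0) -> x = 0.
Proof. exact: (nondegQ BZDr Hfull' B00 s10 Bnd). Qed.

Definition ideal U := sub_bimodule A0 mul A0 U.

Lemma ideal_subA0 U : ideal U -> (U <= A0)%VS.
Proof. by case. Qed.

Lemma idealL U a u : ideal U -> a \in A0 -> u \in U -> mul a u \in U.
Proof. by case=> _ H _ Ha Hu; apply: (subvP H); apply: memM. Qed.

Lemma idealR U a u : ideal U -> a \in A0 -> u \in U -> mul u a \in U.
Proof. by case=> _ _ H Ha Hu; apply: (subvP H); apply: memM. Qed.

Lemma idealP U : (U <= A0)%VS ->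
  (forall a u, a \in A0 -> u \in U -> mul a u \in U /\ mul u a \in U) -> ideal U.
Proof.
move=> HU H; split => //; apply: mprodv_sub => // x y Hx Hy.
  by case: (H _ _ Hx Hy).
by case: (H _ _ Hy Hx).
Qed.

Lemma ideal0 : ideal 0%VS.
Proof.
apply: idealP; first exact: sub0v.
by move=> a u _; rewrite memv0 => /eqP ->; rewrite mr0 ml0 mem0v.
Qed.

Lemma idealD U V : ideal U -> ideal V -> ideal (U + V)%VS.
Proof.
move=> HU HV; apply: idealP; first by rewrite subv_add !ideal_subA0.
move=> a x Ha /memv_addP[u Hu [v Hv ->]].
rewrite mlD mrD; split; apply: memv_add.
- exact: idealL HU Ha Hu.
- exact: idealL HV Ha Hv.
- exact: idealR HU Ha Hu.
- exact: idealR HV Ha Hv.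
Qed.

Lemma idealI U V : ideal U -> ideal V -> ideal (U :&: V)%VS.
Proof.
move=> HU HV; apply: idealP.
  by apply: subv_trans (capvSl _ _) (ideal_subA0 HU).
move=> a x Ha /memv_capP[Hu Hv].
by rewrite !memv_cap (idealL HU Ha Hu) (idealL HV Ha Hv) (idealR HU Ha Hu) (idealR HV Ha Hv).
Qed.

Lemma ideal_sum (I : finType) (P : pred I) (S : I -> {vspace A}) :
  (forall i, P i -> ideal (S i)) -> ideal (\sum_(i | P i) S i)%VS.
Proof. by move=> H; apply: big_ind => //; [exact: ideal0 | exact: idealD]. Qed.

Lemma ideal_mul0 U V u v : ideal U -> ideal V -> (U :&: V = 0)%VS ->
  u \in U -> v \in V -> mul u v = 0.
Proof.
move=> HU HV H0 Hu Hv; apply/eqP; rewrite -memv0 -H0 memv_cap.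
have Hv0 := subvP (ideal_subA0 HV) _ Hv; have Hu0 := subvP (ideal_subA0 HU) _ Hu.
by rewrite (idealR HU Hv0 Hu) (idealL HV Hu0 Hv).
Qed.


Lemma idealA0 : ideal A0.
Proof. by apply: idealP => // a u Ha Hu; rewrite !m00. Qed.

Lemma ideal_mprod U V : ideal U -> ideal V -> ideal (mprodv mul U V).
Proof.
move=> HU HV; apply: idealP.
  apply: mprodv_sub => u v Hu Hv; apply: m00.
    exact: (subvP (ideal_subA0 HU)).
  exact: (subvP (ideal_subA0 HV)).
move=> a x Ha Hx; split.
  apply: (subvP (mS (_ : mprodv mul A0 U <= U)%VS (subvv V))); first by case: HU.
  apply: (subvP (mA2 A0 U V)); exact: memM.
apply: (subvP (mS (subvv U) (_ : mprodv mul V A0 <= V)%VS)); first by case: HV.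
apply: (subvP (mA1 U V A0)); exact: memM.
Qed.

Lemma ideal_mprod0 U V : ideal U -> ideal V -> (U :&: V = 0)%VS -> mprodv mul U V = 0%VS.
Proof. by move=> HU HV H0; apply: mprodv_eq0 => u v Hu Hv; apply: (ideal_mul0 HU HV H0). Qed.

Definition Nsp := ann0 (mprodv mul A0 A1 + mprodv mul A1 A0)%VS.

Lemma isAnnN : is_Ann mul A0 Nsp.
Proof.
move=> x; rewrite /Nsp /ann0 mann; split.
  case=> Hx H; split => // a Ha; split.
    apply: zero0; first exact: m00.
    move=> y Hy; rewrite s10 ?m00 // Bass s01 ?m01 //; apply: H.
    by apply: (subvP (addvSl _ _)); apply: memM.
  apply: zero0; first exact: m00.
  move=> y Hy; rewrite -Bass; apply: H.
  by apply: (subvP (addvSr _ _)); apply: memM.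
case=> Hx H; split => // u /memv_addP[u1 Hu1 [u2 Hu2 ->]].
rewrite BlD.
have -> : B u1 x = 0.
  move: u1 Hu1; apply: mprodv_ind => //.
    by move=> a y z Hy Hz; rewrite BZDl Hy Hz mulr0 addr0.
  move=> a y Ha Hy; rewrite s10 ?m01 // -Bass.
  by have [-> _] := H a Ha; rewrite Bl0.
have -> : B u2 x = 0.
  move: u2 Hu2; apply: mprodv_ind => //.
    by move=> a y z Hy Hz; rewrite BZDl Hy Hz mulr0 addr0.
  move=> y a Hy Ha; rewrite Bass.
  by have [_ ->] := H a Ha; rewrite Br0.
by rewrite addr0.
Qed.

Lemma Nsp_ann x a : x \in Nsp -> a \in A0 -> mul x a = 0 /\ mul a x = 0.
Proof. by move=> /isAnnN [_ H] /H. Qed.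

Lemma Nsp_sub : (Nsp <= A0)%VS.
Proof. exact: ann_sub. Qed.

Lemma idealN : ideal Nsp.
Proof.
apply: idealP; first exact: Nsp_sub.
by move=> a u Ha Hu; have [-> ->] := Nsp_ann Hu Ha; rewrite mem0v.
Qed.

Lemma Nsp_A1 n w : n \in Nsp -> w \in A1 -> mul n w = 0 /\ mul w n = 0.
Proof.
move=> Hn Hw; have Hn0 := subvP Nsp_sub _ Hn; split.
  apply: zero1; first exact: m01.
  by move=> x Hx; rewrite -Bass; have [_ ->] := Nsp_ann Hn Hx; rewrite Bl0.
apply: zero1; first exact: m10.
by move=> x Hx; rewrite s01 ?m10 // Bass; have [-> _] := Nsp_ann Hn Hx; rewrite Br0.
Qed.

Definition irr I := [/\ ideal I, I != 0%VS &
  forall J, ideal J -> (J <= I)%VS -> J = 0%VS \/ J = I].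

Lemma exists_irr d : forall I, ideal I -> I != 0%VS -> (\dim I <= d)%N ->
  exists J, irr J /\ (J <= I)%VS.
Proof.
elim: d => [|d IH] I HI HI0 Hd.
  by move: HI0; rewrite -dimv_eq0; lia.
case: (classic (exists J, [/\ ideal J, (J <= I)%VS, J != 0%VS & J != I])).
  case=> J [HJ HJI HJ0 HJI'].
  have hlt : (\dim J < \dim I)%N.
    rewrite ltn_neqAle dimvS // andbT; apply/negP => /eqP hd.
    by move/negP: HJI'; apply; rewrite eqEdim HJI hd leqnn.
  have [J' [HJ' HJ'J]] := IH J HJ HJ0 (ltnSE (leq_trans hlt Hd)).
  by exists J'; split => //; apply: subv_trans HJ'J HJI.
move=> Hno; exists I; split => //; split => // J HJ HJI.
case: (eqVneq J 0%VS) => [->|HJ0]; first by left.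
case: (eqVneq J I) => [->|HJI']; first by right.
by exfalso; apply: Hno; exists J.
Qed.


Hypothesis Hss : semisimple_bimodule A0 mul A0.

Lemma compl U : ideal U ->
  exists W, [/\ ideal W, (U + W)%VS = A0 & (U :&: W)%VS = 0%VS].
Proof. exact: Hss. Qed.

Lemma irr_props I : irr I -> (I :&: Nsp = 0)%VS ->
  mprodv mul I I = I /\ simple_alg mul I.
Proof.
case=> HI HI0 Hirr HIN.
have [J [HJ HIJ HIJ0]] := compl HI.
have JI0 : mprodv mul J I = 0%VS by apply: ideal_mprod0 => //; rewrite capvC.
have IJ0 : mprodv mul I J = 0%VS by apply: ideal_mprod0.
have HIA := ideal_subA0 HI.
have HII : mprodv mul I I = I.
  have [HIl HIr] : (mprodv mul A0 I <= I)%VS /\ (mprodv mul I A0 <= I)%VS.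
    by case: HI.
  have HIIs : (mprodv mul I I <= I)%VS.
    by apply: subv_trans HIr; apply: mS.
  have H1 := Hirr _ (ideal_mprod idealA0 HI) HIl.
  have H2 := Hirr _ (ideal_mprod HI idealA0) HIr.
  case: H1 => [H1|H1].
    case: H2 => [H2|H2].
      exfalso; move/negP: HI0; apply; rewrite -subv0 -HIN subv_cap subvv /=.
      apply/subvP => x Hx; apply/isAnnN; split; first exact: (subvP HIA).
      by move=> a Ha; rewrite (m0 H2 Hx Ha) (m0 H1 Ha Hx).
    apply/eqP; rewrite eqEdim HIIs /=; apply: dimvS.
    rewrite -[X in (X <= _)%VS]H2 -HIJ.
    apply: subv_trans (mDr _ _ _) _; rewrite IJ0 addv0; exact: subvv.
  apply/eqP; rewrite eqEdim HIIs /=; apply: dimvS.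
  rewrite -[X in (X <= _)%VS]H1 -HIJ.
  apply: subv_trans (mDl _ _ _) _; rewrite JI0 addv0; exact: subvv.
split => //; split; first by rewrite HII.
move=> I' [HI'I HlI' HrI']; apply: Hirr => //.
apply: idealP; first exact: subv_trans HI'I HIA.
move=> a u Ha Hu; move: Ha; rewrite -HIJ => /memv_addP[i Hi [j Hj ->]].
have HuI := subvP HI'I _ Hu.
rewrite mlD mrD (m0 JI0 Hj HuI) (m0 IJ0 HuI Hj) !addr0.
by split; [apply: (subvP HlI') | apply: (subvP HrI')]; apply: memM.
Qed.

Lemma decomp d : forall C, ideal C -> (C :&: Nsp = 0)%VS -> (\dim C <= d)%N ->
  exists n (S : 'I_n -> {vspace A}),
    [/\ forall i, irr (S i) /\ (S i :&: Nsp = 0)%VS,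
        C = (\sum_i S i)%VS & \dim C = (\sum_i \dim (S i))%N].
Proof.
elim: d => [|d IH] C HC HCN Hd.
  have -> : C = 0%VS by apply/eqP; rewrite -dimv_eq0; lia.
  by exists 0%N, (fun _ => 0%VS); split => [[]//||]; rewrite big_ord0 ?dimv0.
case: (eqVneq C 0%VS) => [->|HC0].
  by exists 0%N, (fun _ => 0%VS); split => [[]//||]; rewrite big_ord0 ?dimv0.
have [I [HI HIC]] := exists_irr HC HC0 (leqnn _).
have HIN : (I :&: Nsp = 0)%VS.
  by apply/eqP; rewrite -subv0 -HCN; apply: capvS.
have [J [HJ HIJ HIJ0]] := compl (let: And3 h _ _ := HI in h).
set C' := (C :&: J)%VS.
have HC' : ideal C' by apply: idealI.
have HC'N : (C' :&: Nsp = 0)%VS.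
  by apply/eqP; rewrite -subv0 -HCN; apply: capvS => //; apply: capvSl.
have HCe : C = (I + C')%VS.
  apply/eqP; rewrite eqEsubv subv_add HIC capvSl !andbT.
  apply/subvP => x Hx.
  have : x \in A0 by apply: (subvP (ideal_subA0 HC)).
  rewrite -HIJ => /memv_addP[i Hi [j Hj Hxe]].
  have Hj' : j \in C' by rewrite memv_cap Hj andbT -(addKr i j) -Hxe addrC memvB // (subvP HIC).
  by rewrite Hxe memv_add.
have HIC'0 : (I :&: C' = 0)%VS.
  by apply/eqP; rewrite -subv0 -HIJ0; apply: capvS => //; apply: capvSr.
have Hdim : \dim C = (\dim I + \dim C')%N.
  by have := dimv_sum_cap I C'; rewrite HIC'0 dimv0 -HCe addn0.
have HIpos : (0 < \dim I)%N.
  by rewrite lt0n dimv_eq0; case: HI.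
have hC' : (\dim C' <= d)%N by lia.
have [n [S [HS HSe HSd]]] := IH C' HC' HC'N hC'.
exists n.+1, (fun i => oapp S I (unlift ord0 i)).
have E : forall j, oapp S I (unlift ord0 (lift ord0 j)) = S j.
  by move=> j; rewrite liftK.
split.
- move=> i; case: (unliftP ord0 i) => [j _|_] /=; first exact: HS.
  by split.
- rewrite big_ord_recl (eq_bigr _ (fun j _ => E j)) unlift_none /= -HSe.
  exact: HCe.
- rewrite big_ord_recl (eq_bigr _ (fun j _ => congr1 (@dimv _ _) (E j))).
  by rewrite unlift_none /= -HSd.
Qed.


Lemma ann1_bimod U : ideal U -> sub_bimodule A0 mul A1 (ann1 U).
Proof.
move=> HU; split; first exact: ann_sub.
  apply: mprodv_sub => a z Ha /mann[Hz H]; apply/mann; split; first exact: m01.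
  by move=> u Hu; rewrite -Bass H // idealR.
apply: mprodv_sub => z a /mann[Hz H] Ha; apply/mann; split; first exact: m10.
move=> u Hu; have Hu0 := subvP (ideal_subA0 HU) _ Hu.
by rewrite s01 ?m10 // Bass s10 ?m00 // H // idealL.
Qed.

Lemma ann1_kill U u z : ideal U -> u \in U -> z \in ann1 U ->
  mul u z = 0 /\ mul z u = 0.
Proof.
move=> HU Hu /mann[Hz H]; have Hu0 := subvP (ideal_subA0 HU) _ Hu; split.
  apply: zero1; first exact: m01.
  by move=> x Hx; rewrite -Bass H // idealL.
apply: zero1; first exact: m10.
by move=> x Hx; rewrite s01 ?m10 // Bass s10 ?m00 // H // idealR.
Qed.

Lemma ann0_ann1 U : (U <= A0)%VS -> ann0 (ann1 U) = U.
Proof.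
move=> HU; apply/eqP; rewrite eq_sym eqEdim; apply/andP; split.
  apply/subvP => u Hu; apply/mann; split; first exact: (subvP HU).
  by move=> z /mann[Hz H]; rewrite s10 ?(subvP HU) // H.
have := dim_ann0 (ann_sub B A1 U); have := dim_ann1 HU; rewrite dimA /ann1 /ann0; lia.
Qed.

Lemma irr_ann S0 Ci : irr S0 -> ideal Ci -> (S0 + Ci)%VS = A0 ->
  (\dim S0 + \dim Ci)%N = \dim A0 -> irreducible_bimodule A0 mul A1 (ann1 Ci).
Proof.
move=> HS0 HCi HSC HdSC; have [HS0i HS00 HS0irr] := HS0.
have HCA := ideal_subA0 HCi.
have Hd := dim_ann1 HCA; rewrite -dimA in Hd.
split; first exact: ann1_bimod.
  by rewrite -dimv_eq0; move: HS00; rewrite -dimv_eq0; lia.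
move=> V [HV1 HV2 HV3].
have HVA1 : (V <= A1)%VS by apply: subv_trans HV1 (ann_sub _ _ _).
have HdW := dim_ann0 HVA1; 
have HX : ideal (S0 :&: (ann0 V))%VS.
  apply: idealP; first by apply: subv_trans (capvSl _ _) (ideal_subA0 HS0i).
  move=> a x Ha /memv_capP[Hx1 /mann[Hx2 Hx]].
  split; apply/memv_capP; (split; [by rewrite ?(idealL HS0i Ha Hx1) ?(idealR HS0i Ha Hx1)|apply/mann]).
    split; first exact: m00.
    move=> v Hv; rewrite -Bass; apply: Hx; apply: (subvP HV3).
    by apply: memM.
  split; first exact: m00.
  move=> v Hv; have Hv1 := subvP HVA1 _ Hv.
  rewrite s10 ?m00 // Bass s01 ?m01 //; apply: Hx; apply: (subvP HV2).
  by apply: memM.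
case: (HS0irr _ HX (capvSl _ _)) => [HX0|HXS].
  right; apply/eqP; rewrite eqEdim HV1 /=.
  have := dimv_sum_cap S0 (ann0 V); rewrite HX0 dimv0 addn0.
  have : (\dim (S0 + (ann0 V)) <= \dim A0)%N.
    by apply: dimvS; rewrite subv_add (ideal_subA0 HS0i) ann_sub.
  lia.
left; apply/eqP; rewrite -dimv_eq0.
have : (A0 <= (ann0 V))%VS.
  rewrite -HSC subv_add; apply/andP; split.
    by rewrite -HXS capvSr.
  apply/subvP => c Hc; apply/mann; split; first exact: (subvP HCA).
  move=> v Hv; have /mann[Hv1 Hv2] := subvP HV1 _ Hv.
  by rewrite s10 ?(subvP HCA) // Hv2.
move/dimvS; lia.
Qed.

Lemma ShS S0 Ci : irr S0 -> ideal Ci -> mprodv mul S0 S0 = S0 ->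
  (S0 + Ci)%VS = A0 -> (\dim S0 + \dim Ci)%N = \dim A0 ->
  mprodv mul S0 (ann1 Ci) = ann1 Ci /\ mprodv mul (ann1 Ci) S0 = ann1 Ci.
Proof.
move=> HS0 HCi HSS HSC HdSC.
have [Hb Hne Hirr] := irr_ann HS0 HCi HSC HdSC.
have HSA := ideal_subA0 (let: And3 h _ _ := HS0 in h).
have [_ HbL HbR] := Hb.
have Hnz : forall P : {vspace A} -> {vspace A} -> Prop,
    (forall z, z \in ann1 Ci -> forall x, x \in S0 -> B x z = 0) -> False.
  move=> _ H; move/negP: Hne; apply; rewrite -subv0; apply/subvP => z Hz.
  rewrite memv0; apply/eqP; apply: zero1; first exact: (subvP (ann_sub B A1 Ci) _ Hz).
  move=> x; rewrite -HSC => /memv_addP[s Hs [c Hc ->]].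
  have /mann[_ Hz'] := Hz.
  by rewrite BlD H // Hz' // addr0.
split.
  have HT : sub_bimodule A0 mul (ann1 Ci) (mprodv mul S0 (ann1 Ci)).
    split.
    - by apply: subv_trans HbL; apply: mS.
    - apply: subv_trans (mA2 _ _ _) _; apply: mS => //.
      by case: HS0 => [[]].
    - apply: subv_trans (mA1 _ _ _) _; apply: mS => //.
  case: (Hirr _ HT) => // H0; exfalso; apply: (Hnz (fun _ _ => True)).
  move=> z Hz x; rewrite -HSS; move: x; apply: mprodv_ind => //.
    by move=> a x y Hx Hy; rewrite BZDl Hx Hy mulr0 addr0.
  by move=> s1 s2 Hs1 Hs2; rewrite Bass (m0 H0 Hs2 Hz) Br0.
have HT : sub_bimodule A0 mul (ann1 Ci) (mprodv mul (ann1 Ci) S0).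
  split.
  - by apply: subv_trans HbR; apply: mS.
  - apply: subv_trans (mA2 _ _ _) _; apply: mS => //.
  - apply: subv_trans (mA1 _ _ _) _; apply: mS => //.
    by case: HS0 => [[]].
case: (Hirr _ HT) => // H0; exfalso; apply: (Hnz (fun _ _ => True)).
move=> z Hz x; rewrite -HSS; move: x; apply: mprodv_ind => //.
  by move=> a x y Hx Hy; rewrite BZDl Hx Hy mulr0 addr0.
move=> s1 s2 Hs1 Hs2; have Hz1 := subvP (ann_sub _ _ _) _ Hz.
have Hs1A := subvP HSA _ Hs1; have Hs2A := subvP HSA _ Hs2.
by rewrite s01 ?m00 // -Bass (m0 H0 Hz Hs1) Bl0.
Qed.


Lemma sum_ideal_kill (I : finType) (S : I -> {vspace A}) c x :
  c \in (\sum_i S i)%VS -> (forall i s, s \in S i -> mul s x = 0 /\ mul x s = 0) ->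
  mul c x = 0 /\ mul x c = 0.
Proof.
move=> /memv_sumP[vs Hvs ->] H.
apply: (sum_closed (P := fun c => mul c x = 0 /\ mul x c = 0)).
- by rewrite ml0 mr0.
- by move=> a y z [Hy1 Hy2] [Hz1 Hz2]; rewrite mlZD mrZD Hy1 Hy2 Hz1 Hz2 scaler0 addr0.
- by move=> i _; apply: H; apply: Hvs.
Qed.

Lemma main_sec :
  exists (n : nat) (S Sh : 'I_n -> {vspace A}) (N Nh : {vspace A}),
    [/\ (forall i, ideal_of mul A0 (S i) /\ simple_alg mul (S i)),
        is_Ann mul A0 N,
        (forall i, irreducible_bimodule A0 mul A1 (Sh i)),
        sub_bimodule A0 mul A1 Nh /\
          mprodv mul A0 Nh = 0%VS /\ mprodv mul Nh A0 = 0%VS &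
        [/\ (A0 = (\sum_i S i + N)%VS /\ directv (\sum_i S i + N)) /\
            (A1 = (\sum_i Sh i + Nh)%VS /\ directv (\sum_i Sh i + Nh)),
            (forall i j, i != j ->
               mprodv mul (Sh i) (Sh j) = 0%VS /\ mprodv mul (Sh j) (Sh i) = 0%VS),
            (forall i, mprodv mul (Sh i) (Sh i) = 0%VS \/
                       mprodv mul (Sh i) (Sh i) = S i),
            (forall i, mprodv mul Nh (Sh i) = 0%VS /\ mprodv mul (Sh i) Nh = 0%VS) &
            (mprodv mul Nh Nh <= N)%VS]].
Proof.
have [C0 [HC0 HNC0 HNC00]] := compl idealN.
have HC0N : (C0 :&: Nsp = 0)%VS by rewrite capvC.
have [n [S [HS HSe HSd]]] := decomp HC0 HC0N (leqnn _).
pose C := (\sum_i S i)%VS.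
have HCe : C0 = C by [].
have HSi : forall i, ideal (S i) by move=> i; have [[]] := HS i.
have HSirr : forall i, irr (S i) by move=> i; have [] := HS i.
have HSp : forall i, mprodv mul (S i) (S i) = S i /\ simple_alg mul (S i).
  by move=> i; have [h1 h2] := HS i; apply: irr_props.
have HC : ideal C by apply: ideal_sum.
have HCA : (C <= A0)%VS := ideal_subA0 HC.
have HA0 : A0 = (C + Nsp)%VS by rewrite -HCe addvC HNC0.
have HdA0 : \dim A0 = (\sum_i \dim (S i) + \dim Nsp)%N.
  have := dimv_sum_cap Nsp C0; rewrite HNC00 dimv0 addn0 HNC0 HSd; lia.
pose Ci i := (\sum_(j | j != i) S j + Nsp)%VS.
have HCi : forall i, ideal (Ci i).
  by move=> i; apply: idealD; [apply: ideal_sum => j _ | exact: idealN].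
have HSCi : forall i, (S i + Ci i)%VS = A0.
  by move=> i; rewrite /Ci addvA HA0 /C [in RHS](bigD1 i) //=.
have HdCi : forall i, (\dim (S i) + \dim (Ci i))%N = \dim A0.
  move=> i; have h1 := dimv_sum_cap (S i) (Ci i); rewrite HSCi in h1.
  have h2 : (\dim (\sum_(j | j != i) S j) <= \sum_(j | j != i) \dim (S j))%N.
    exact: dimv_leq_sum.
  have h3 : (\dim (Ci i) <= \dim (\sum_(j | j != i) S j) + \dim Nsp)%N.
    by rewrite /Ci; have := dimv_sum_cap (\sum_(j | j != i) S j) Nsp; lia.
  have h4 : (\sum_j \dim (S j) = \dim (S i) + \sum_(j | j != i) \dim (S j))%N.
    by rewrite (bigD1 i).
  lia.
have HSC0 : forall i, (S i :&: Ci i = 0)%VS.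
  move=> i; apply/eqP; rewrite -dimv_eq0.
  have := dimv_sum_cap (S i) (Ci i); rewrite HSCi HdCi; lia.
have HCiA : forall i, (Ci i <= A0)%VS by move=> i; apply: ideal_subA0.
have HShirr : forall i, irreducible_bimodule A0 mul A1 (ann1 (Ci i)).
  by move=> i; apply: irr_ann.
have HShS : forall i, mprodv mul (S i) (ann1 (Ci i)) = ann1 (Ci i) /\
                      mprodv mul (ann1 (Ci i)) (S i) = ann1 (Ci i).
  by move=> i; apply: ShS => //; have [] := HSp i.
have HdSh : forall i, \dim (ann1 (Ci i)) = \dim (S i).
  by move=> i; have := dim_ann1 (HCiA i); have := HdCi i; rewrite dimA; lia.
have HNhb := ann1_bimod HC.
have HdNh : \dim (ann1 C) = \dim Nsp.
  have := dim_ann1 HCA; rewrite -dimA HdA0 -HSd HCe; lia.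
have HNhA0 : forall z a, z \in ann1 C -> a \in A0 -> mul a z = 0 /\ mul z a = 0.
  move=> z a Hz; rewrite HA0 => /memv_addP[c Hc [m Hm ->]].
  have Hz1 := subvP (ann_sub B A1 C) _ Hz.
  have [h1 h2] := ann1_kill HC Hc Hz; have [h3 h4] := Nsp_A1 Hm Hz1.
  by rewrite mlD mrD h1 h2 h3 h4 addr0.
have Hzero : forall X : {vspace A}, mprodv mul X 0%VS = 0%VS.
  move=> X; apply: mprodv_eq0 => x v _; rewrite memv0 => /eqP ->; exact: mr0.
have Hzero' : forall X : {vspace A}, mprodv mul 0%VS X = 0%VS.
  move=> X; apply: mprodv_eq0 => v x; rewrite memv0 => /eqP -> _; exact: ml0.
have HSCj : forall i j, i != j -> (S i <= Ci j)%VS.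
  move=> i j Hij; apply: subv_trans (addvSl _ _).
  exact: (sumv_sup i Hij (subvv _)).
have Hij : forall i j, i != j -> mprodv mul (ann1 (Ci i)) (ann1 (Ci j)) = 0%VS.
  move=> i j Hij; apply: mprodv_le0.
  rewrite -{1}(HShS i).2; apply: subv_trans (mA1 _ _ _) _.
  have -> : mprodv mul (S i) (ann1 (Ci j)) = 0%VS.
    apply: mprodv_eq0 => s z Hs Hz.
    exact: (ann1_kill (HCi j) (subvP (HSCj i j Hij) _ Hs) Hz).1.
  by rewrite Hzero.
pose T := (\sum_i ann1 (Ci i) + ann1 C)%VS.
have HT1 : (T <= A1)%VS.
  rewrite subv_add ann_sub andbT; apply/subv_sumP => i _; exact: ann_sub.
have HT0 : ann0 T = 0%VS.
  apply/eqP; rewrite -subv0; apply/subvP => x /mann[Hx H]; rewrite memv0; apply/eqP.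
  have HxCi : forall i, x \in Ci i.
    move=> i; rewrite -(ann0_ann1 (HCiA i)); apply/mann; split => // z Hz.
    apply: H; apply: (subvP (addvSl _ _)).
    exact: (subvP (sumv_sup i isT (subvv _))).
  have HxC : x \in C.
    rewrite -(ann0_ann1 HCA); apply/mann; split => // z Hz.
    by apply: H; apply: (subvP (addvSr _ _)).
  have HxN : x \in Nsp.
    apply/isAnnN; split => // a; rewrite HA0 => /memv_addP[c Hc [m Hm ->]].
    have [h1 h2] := Nsp_ann Hm Hx.
    have [h3 h4] : mul c x = 0 /\ mul x c = 0.
      apply: sum_ideal_kill Hc _ => i s Hs; split.
        exact: (ideal_mul0 (HSi i) (HCi i) (HSC0 i) Hs (HxCi i)).
      by apply: (ideal_mul0 (HCi i) (HSi i) _ (HxCi i) Hs); rewrite capvC.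
    by rewrite mlD mrD h1 h2 h3 h4 addr0.
  by apply/eqP; rewrite -memv0 -HNC00 memv_cap HxN HCe HxC.
have HdT : \dim T = \dim A1.
  by have := dim_ann0 HT1; rewrite HT0 dimv0 dimA.
have HTe : A1 = T.
  by apply/esym/eqP; rewrite eqEdim HT1 HdT leqnn.
exists n, S, (fun i => ann1 (Ci i)), Nsp, (ann1 C); split.
- by move=> i; split; [exact: HSi | have [] := HSp i].
- exact: isAnnN.
- exact: HShirr.
- split => //; split; apply: mprodv_eq0.
    by move=> a z Ha Hz; have [] := HNhA0 z a Hz Ha.
  by move=> z a Hz Ha; have [] := HNhA0 z a Hz Ha.
split.
- split; split.
  + exact: HA0.
  + by rewrite directvE /= -HA0 HdA0.
  + exact: HTe.
  + rewrite directvE /= -/T -HTe -dimA HdA0 HdNh.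
    by rewrite (eq_bigr _ (fun i _ => HdSh i)).
- by move=> i j h; split; apply: Hij => //; rewrite eq_sym.
- move=> i; have [HSi' _ HSirr'] := HSirr i.
  have [HbL _ _] := HShirr i; have [HbA HbL' HbR'] := HbL.
  have HX : ideal (mprodv mul (ann1 (Ci i)) (ann1 (Ci i))).
    apply: idealP.
      by apply: mprodv_sub => y z Hy Hz; apply: m11; [apply: (subvP HbA) | apply: (subvP HbA)].
    move=> a x Ha Hx; split.
      apply: (subvP (mS HbL' (subvv _))); apply: (subvP (mA2 _ _ _)).
      exact: memM.
    apply: (subvP (mS (subvv _) HbR')); apply: (subvP (mA1 _ _ _)).
    exact: memM.
  have HXS : (mprodv mul (ann1 (Ci i)) (ann1 (Ci i)) <= S i)%VS.
    rewrite -{1}(HShS i).1; apply: subv_trans (mA1 _ _ _) _.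
    apply: subv_trans (mS (subvv _) (ideal_subA0 HX)) _.
    by case: HSi'.
  exact: HSirr' HX HXS.
- move=> i; split; apply: mprodv_le0.
    rewrite -{1}(HShS i).1; apply: subv_trans (mA2 _ _ _) _.
    have -> : mprodv mul (ann1 C) (S i) = 0%VS.
      apply: mprodv_eq0 => z s Hz Hs.
      exact: (ann1_kill HC (subvP (sumv_sup i isT (subvv _)) _ Hs) Hz).2.
    by rewrite Hzero'.
  rewrite -{1}(HShS i).2; apply: subv_trans (mA1 _ _ _) _.
  have -> : mprodv mul (S i) (ann1 C) = 0%VS.
    apply: mprodv_eq0 => s z Hs Hz.
    exact: (ann1_kill HC (subvP (sumv_sup i isT (subvv _)) _ Hs) Hz).1.
  by rewrite Hzero.
- apply: mprodv_sub => y z Hy Hz; apply/isAnnN.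
  have Hy1 := subvP (ann_sub B A1 C) _ Hy; have Hz1 := subvP (ann_sub B A1 C) _ Hz.
  split; first exact: m11.
  move=> a Ha; have [h1 h2] := HNhA0 z a Hz Ha; have [h3 h4] := HNhA0 y a Hy Ha.
  by rewrite Hass h2 mr0 -Hass h3 ml0.
Qed.

End Main.

End Helpers.
Unset Implicit Arguments.

Local Open Scope vspace_scope.

Theorem mainTheorem12 (F : closedFieldType) (A : vectType F)
    (A0 A1 : {vspace A}) (mul : A -> A -> A) (B : A -> A -> F) :
  [pchar F] =i pred0 ->
  superalgebra A0 A1 mul ->
  odd_symmetric A0 A1 mul B ->
  semisimple_bimodule A0 mul A0 ->
  exists (n : nat) (S Sh : 'I_n -> {vspace A}) (N Nh : {vspace A}),
    [/\ (forall i, ideal_of mul A0 (S i) /\ simple_alg mul (S i)),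
        is_Ann mul A0 N,
        (forall i, irreducible_bimodule A0 mul A1 (Sh i)),
        sub_bimodule A0 mul A1 Nh /\
          mprodv mul A0 Nh = 0%VS /\ mprodv mul Nh A0 = 0%VS &
        [/\ (A0 = (\sum_i S i + N)%VS /\ directv (\sum_i S i + N)) /\
            (A1 = (\sum_i Sh i + Nh)%VS /\ directv (\sum_i Sh i + Nh)),
            (forall i j, i != j ->
               mprodv mul (Sh i) (Sh j) = 0%VS /\ mprodv mul (Sh j) (Sh i) = 0%VS),
            (forall i, mprodv mul (Sh i) (Sh i) = 0%VS \/
                       mprodv mul (Sh i) (Sh i) = S i),
            (forall i, mprodv mul Nh (Sh i) = 0%VS /\ mprodv mul (Sh i) Nh = 0%VS) &
            (mprodv mul Nh Nh <= N)%VS]].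
Proof.
move=> _ Hsup Hsym Hss; exact: (Helpers.main_sec Hsup Hsym Hss).
Qed.
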